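(* Let $S\le T_n$ be a transformation monoid and $G$ the normalizer of $S$ in $S_n$. If $a\in S$ is $\mathcal R$-related in $SG$ to an idempotent $e$ of $SG$, then $e\in S$ and $a$ is $\mathcal R$-related in $S$ to $e$.
   Context: A transformation monoid is a subsemigroup of $T_n$ containing the identity map; $G=\{g\in S_n:g^{-1}Sg=S\}$ and $SG=\{sg:s\in S,g\in G\}$, a semigroup. For a semigroup $U$, elements $a,b\in U$ are $\mathcal R$-related in $U$ if there exist $u,v\in U^1$ with $a=bu$ and $b=av$, where $U^1$ is $U$ with an identity adjoined. *)

(* Defs.v *)
From mathcomp Require Import all_boot all_fingroup.
Set Implicit Arguments. Unset Strict Implicit. Unset Printing Implicit Defensive.

Definition trans (n : nat) := {ffun 'I_n -> 'I_n}.

(* Product with maps acting on the right (semigroup convention):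
   x (s t) = (x s) t, i.e. first s, then t. *)
Definition tmul (n : nat) (s t : trans n) : trans n := [ffun x => t (s x)].

Definition tid (n : nat) : trans n := [ffun x => x].

Definition pmap (n : nat) (g : {perm 'I_n}) : trans n := [ffun x => g x].

Definition is_tmonoid (n : nat) (S : {set trans n}) : Prop :=
  tid n \in S /\ (forall s t, s \in S -> t \in S -> tmul s t \in S).

Definition normalizer (n : nat) (S : {set trans n}) : {set {perm 'I_n}} :=
  [set g : {perm 'I_n} |
     [set tmul (tmul (pmap g^-1) s) (pmap g) | s in S] == S].

Definition SG (n : nat) (S : {set trans n}) : {set trans n} :=
  [set tmul s (pmap g) | s in S, g in normalizer S].

Definition Rrel (n : nat) (U : {set trans n}) (a b : trans n) : Prop :=
  (exists u, (u \in U \/ u = tid n) /\ a = tmul b u) /\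
  (exists v, (v \in U \/ v = tid n) /\ b = tmul a v).

(* Main.v *)
Require Import Defs.
From mathcomp Require Import all_boot all_fingroup.

Local Open Scope group_scope.
Local Notation pmap := Defs.pmap.
Section H.
Variable n : nat.
Implicit Types s t u : trans n.

Lemma tmulA s t u : tmul (tmul s t) u = tmul s (tmul t u).
Proof. by apply/ffunP => x; rewrite !ffunE. Qed.
Lemma tmul1r s : tmul s (tid n) = s.
Proof. by apply/ffunP => x; rewrite !ffunE. Qed.
Lemma tmul1l s : tmul (tid n) s = s.
Proof. by apply/ffunP => x; rewrite !ffunE. Qed.
Lemma pmapM (g h : {perm 'I_n}) : pmap (g * h) = tmul (pmap g) (pmap h).
Proof. by apply/ffunP => x; rewrite !ffunE permM. Qed.
Lemma pmap1 : pmap (1 : {perm 'I_n}) = tid n.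
Proof. by apply/ffunP => x; rewrite !ffunE perm1. Qed.
Lemma pmapVK (h : {perm 'I_n}) : tmul (pmap h^-1) (pmap h) = tid n.
Proof. by rewrite -pmapM mulVg pmap1. Qed.
End H.

Definition goodp {n} (S : {set trans n}) (h : {perm 'I_n}) :=
  forall s, s \in S -> tmul (tmul (pmap h) s) (pmap h^-1) \in S.

Lemma goodp_norm {n} (S : {set trans n}) g : g \in normalizer S -> goodp S g.
Proof.
rewrite inE => /eqP E s sS.
have : s \in [set tmul (tmul (pmap g^-1) s0) (pmap g) | s0 in S] by rewrite E.
case/imsetP => s' s'S ->.
rewrite !tmulA -pmapM mulgV pmap1 tmul1r -!tmulA -pmapM mulgV pmap1 tmul1l //.
Qed.

Lemma goodpM {n} (S : {set trans n}) g h : goodp S g -> goodp S h -> goodp S (g * h).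
Proof.
move=> Hg Hh s sS; rewrite invMg !pmapM.
have := Hg _ (Hh _ sS).
by rewrite !tmulA.
Qed.

Lemma goodpX {n} (S : {set trans n}) g k : goodp S g -> goodp S (g ^+ k).
Proof.
move=> Hg; elim: k => [|k IH].
  by move=> s sS; rewrite expg0 invg1 pmap1 tmul1l tmul1r.
by rewrite expgSr; apply: goodpM.
Qed.

Theorem lemma4p2 (n : nat) (S : {set trans n}) (a e : trans n) :
  is_tmonoid S ->
  a \in S ->
  e \in SG S ->
  tmul e e = e ->
  Rrel (SG S) a e ->
  e \in S /\ Rrel S a e.
Proof.
move=> [S1 SM] aS _ ee [[u [Hu Eu]] [v [Hv Ev]]].
have Hea : a = tmul e a.
  by rewrite {2}Eu -tmulA ee -Eu.
suff [w [wS Ew]] : exists w, w \in S /\ e = tmul a w.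
  split; first by rewrite Ew; apply: (SM).
  split; first by exists a; split; [left|].
  by exists w; split; [left|].
case: Hv => [uSG|vE]; last by exists (tid n); split => //; rewrite -vE.
case/imset2P: uSG => s g sS gN Ev0; rewrite Ev0 in Ev; clear Eu; move: Ev => Eu.
have Gg := goodp_norm S g gN.
have key : forall m, exists t, t \in S /\
    e = tmul (tmul (tmul a s) t) (pmap (g ^+ m.+1)).
  elim=> [|m [t [tS Et]]].
    exists (tid n); split => //; by rewrite tmul1r expg1 tmulA.
  exists (tmul t (tmul (tmul (pmap (g ^+ m.+1)) (tmul a s)) (pmap (g ^+ m.+1)^-1))).
  split.
    apply: (SM) => //; apply: (goodpX S g m.+1 Gg); exact: (SM).
  rewrite -{1}ee {1}Et Eu.
  rewrite (expgSr g m.+1) pmapM.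
  by rewrite !tmulA -(@tmulA _ (pmap _^-1)) pmapVK tmul1l.
have [t [tS Et]] := key (#[g].-1).
rewrite prednK ?order_gt0 // expg_order pmap1 tmul1r in Et.
exists (tmul s t); split; first by apply: (SM).
by rewrite Et tmulA.
Qed.
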